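(* Let $d\ge1$, let $\Lambda\subset\mathbb{R}^{2d}$ be a lattice, let $r>0$ and let $\phi\in\ell^1(\Lambda)$ be non-negative with $$1-\delta\le\sum_{\lambda\in\Lambda}\phi(\lambda)\le1,\qquad\sum_{\lambda\in\Lambda}|\lambda|\,|\phi(\lambda)|<\infty$$ for some $0\le\delta\le1$. Then there exists a constant $C$ depending on $r$ such that $$\Vert\chi_\Omega-\chi_\Omega*_\Lambda\phi\Vert_{\ell^1(\Lambda)}\le C\Big(\sum_{\lambda\in\Lambda}|\lambda|\,|\phi(\lambda)|+1\Big)\#\partial^{r_\Lambda}_\Lambda\Omega+\delta\,\#(\Omega\cap\Lambda)$$ for every compact set $\Omega\subset\mathbb{R}^{2d}$, where $r_\Lambda=r+l_M$ and $l_M$ is the diameter of the fundamental domain of $\Lambda$.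
   Context: A lattice is $\Lambda=M\mathbb{Z}^{2d}$ with $M$ an invertible real $2d\times2d$ matrix; $l_M$ denotes the diameter of the (fixed) fundamental domain of $\Lambda$. The discrete convolution is $(a*_\Lambda b)(\lambda)=\sum_{\lambda'\in\Lambda}a(\lambda')b(\lambda-\lambda')$, and $\Vert c\Vert_{\ell^1(\Lambda)}=\sum_{\lambda\in\Lambda}|c(\lambda)|$; $\chi_\Omega$ is regarded as a function on $\Lambda$. $B(z,r)$ is the open ball; for $r>0$, $\partial^r_\Lambda\Omega=\Lambda\cap(\partial\Omega+B(0,r))$, and $\#$ denotes cardinality. *)

(* Defs.v *)
From HB Require Import structures.
From mathcomp Require Import all_boot all_order all_algebra.
From mathcomp Require Import all_classical all_reals all_analysis.
Set Implicit Arguments. Unset Strict Implicit. Unset Printing Implicit Defensive.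
Import Order.TTheory GRing.Theory Num.Theory.
Import numFieldNormedType.Exports.
Local Open Scope classical_set_scope.
Local Open Scope ring_scope.

Definition enorm (R : realType) (n : nat) (x : 'cV[R]_n) : R :=
  Num.sqrt (\sum_(i < n) x i 0 ^+ 2).

Definition lattice (R : realType) (n : nat) (M : 'M[R]_n) : set 'cV[R]_n :=
  [set M *m map_mx (fun z : int => z%:~R) k | k in [set: 'cV[int]_n]].

Definition fund_domain (R : realType) (n : nat) (M : 'M[R]_n) : set 'cV[R]_n :=
  [set M *m t | t in [set t : 'cV[R]_n | forall i, 0 <= t i 0 < 1]].

Definition diam_fund (R : realType) (n : nat) (M : 'M[R]_n) : R :=
  sup [set enorm (x - y) | x in fund_domain M & y in fund_domain M].

Definition bdry (R : realType) (n : nat) (O : set 'cV[R]_n) : set 'cV[R]_n :=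
  closure O `\` O^°.

Definition lat_bdry (R : realType) (n : nat) (M : 'M[R]_n) (O : set 'cV[R]_n) (r : R)
  : set 'cV[R]_n :=
  lattice M `&` [set x | exists2 y, bdry O y & enorm (x - y) < r].

Definition card_e (R : realType) (n : nat) (A : set 'cV[R]_n) : \bar R :=
  (\esum_(x in A) 1%E)%E.

Definition l1norm (R : realType) (n : nat) (M : 'M[R]_n) (c : 'cV[R]_n -> R) : \bar R :=
  (\esum_(x in lattice M) (`|c x|)%:E)%E.

(* discrete convolution over Lambda: sum of the (absolutely summable) family
   lambda' |-> a(lambda') b(lambda - lambda'), computed as the difference of the
   sums of positive and negative parts. *)
Definition lconv (R : realType) (n : nat) (M : 'M[R]_n) (a b : 'cV[R]_n -> R)
  (x : 'cV[R]_n) : R :=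
  fine (\esum_(y in lattice M) ((Num.max (a y * b (x - y)) 0)%:E))%E -
  fine (\esum_(y in lattice M) ((Num.max (- (a y * b (x - y))) 0)%:E))%E.

(* Main.v *)
Require Import Defs.
From HB Require Import structures.
From mathcomp Require Import all_boot all_order all_algebra.
From mathcomp Require Import all_classical all_reals all_analysis.
Import Order.TTheory GRing.Theory Num.Theory.
Import numFieldNormedType.Exports.
Local Open Scope classical_set_scope.
Local Open Scope ring_scope.

From mathcomp Require Import ring lra zify.
Set Implicit Arguments. Unset Strict Implicit. Unset Printing Implicit Defensive.

Section E.
Variables (R : realType) (T : choiceType).
Local Open Scope ereal_scope.
Lemma fsumZ (A : set T) (c : R) (a : T -> \bar R) : finite_set A -> (forall i, A i -> 0 <= a i) ->
  \sum_(i \in A) (c%:E * a i) = c%:E * \sum_(i \in A) a i.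
Proof.
move=> fA a0; rewrite !fsbig_finite //= big_seq [in RHS]big_seq ge0_sume_distrr //.
by move=> i; rewrite in_fset_set // inE => /a0.
Qed.

Lemma esumZ (S : set T) (c : R) (a : T -> \bar R) : (0 <= c)%R -> (forall i, S i -> 0 <= a i) ->
  \esum_(i in S) (c%:E * a i) = c%:E * \esum_(i in S) a i.
Proof.
move=> c0 a0; rewrite /esum -ereal_supZl //; last first.
  by apply/set0P; exists (\sum_(i \in set0) a i); exists set0 => //; exact: fsets_set0.
congr ereal_sup; apply/seteqP; split => x.
  move=> [A [fA AS] <-{x}]; exists (\sum_(i \in A) a i); first by exists A.
  by rewrite fsumZ // => i Ai; apply: a0; apply: AS.
move=> [_ [A [fA AS] <-] <-{x}]; exists A => //.
by rewrite fsumZ // => i Ai; apply: a0; apply: AS.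
Qed.

Lemma esum_sub (A B : set T) (a : T -> \bar R) : A `<=` B -> (forall i, B i -> 0 <= a i) ->
  \esum_(i in A) a i <= \esum_(i in B) a i.
Proof.
move=> AB a0; rewrite esum_mkcond [leRHS]esum_mkcond; apply: le_esum => i _.
case: ifPn => iA; first by rewrite ifT // inE; apply: AB; rewrite -inE.
by case: ifPn => // /[!inE] /a0.
Qed.

Lemma esum_trans (S : set T) (e : T -> T) (a : T -> \bar R) : set_bij S S e ->
  \esum_(i in S) a i = \esum_(i in S) a (e i).
Proof. exact: reindex_esum. Qed.
End E.

Local Open Scope ereal_scope.
Lemma esum_swap (R : realType) (T1 T2 : choiceType) (A : set T1) (B : set T2) (a : T1 -> T2 -> \bar R) :
  (forall i j, A i -> B j -> 0 <= a i j) ->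
  \esum_(i in A) \esum_(j in B) a i j = \esum_(j in B) \esum_(i in A) a i j.
Proof.
move=> a0.
rewrite (esum_esum (J := fun=> B)) // (esum_esum (J := fun=> A)); last by move=> i j Bi Aj; exact: a0.
rewrite (reindex_esum (A `*` B) _ (fun x => (x.2, x.1))) //; split=> //=.
- by move=> [i j] [/= ? ?]; split.
- by move=> [i1 i2] [j1 j2] /= _ _ [] -> ->.
- by move=> [i1 i2] [Pi1 Qi2] /=; exists (i2, i1).
Qed.



Local Close Scope ereal_scope.
Section B.
Variables (R : realType) (n : nat).
Lemma fcont (a v : 'cV[R]_n) : continuous (fun t : R => a + t *: v).
Proof. move=> t. apply: cvgD; [exact: cvg_cst | apply: cvgZr_tmp; exact: cvg_id]. Qed.

Lemma seg_bdry (O : set 'cV[R]_n) a b : closed O -> O a -> ~ O b ->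
  exists2 s : R, 0 <= s <= 1 & bdry O (a + s *: (b - a)).
Proof.
move=> clO Oa Ob.
pose f := fun t : R => a + t *: (b - a).
have fc : continuous f by apply: fcont.
pose T := `[(0:R), 1]%classic `&` f @^-1` O.
have T0 : T 0 by split; [rewrite /= in_itv /= lexx ler01 | rewrite /preimage /= /f scale0r addr0].
have Tub : has_ubound T by exists 1 => t [] /=; rewrite in_itv /= => /andP[].
have Tcl : closed T.
  apply: closedI; first exact: itv_closed.
  apply: preimage_closed => // t _; exact: fc.
have Tts : T (sup T) by apply: Tcl; apply: closure_sup => //; exists 0.
exists (sup T); first by case: Tts => /=; rewrite in_itv.
split; first by apply: subset_closure; case: Tts.
move=> /= intO.
have nO : nbhs (sup T) (f @^-1` O) by exact: fc _ _ intO.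
have ts1 : sup T < 1.
  case: Tts => /=; rewrite in_itv /= => /andP[_]; rewrite le_eqVlt => /orP[/eqP e|//].
  by rewrite /f e scale1r addrC subrK.
case/nbhs_ballP: nO => e e0 be.
pose t := Num.min (sup T + e / 2) 1.
have tsT : sup T < t by rewrite /t lt_min ts1 andbT ltrDl divr_gt0.
have Tt : T t.
  split.
    rewrite /= in_itv /= ge_min lexx orbT andbT /t le_min ler01 andbT.
    apply: addr_ge0; last by rewrite ltW // divr_gt0.
    by case: Tts => /=; rewrite in_itv /= => /andP[].
  apply: be; rewrite /ball /=.
  have h1 : t <= sup T + e / 2 by rewrite /t ge_min lexx.
  have h2 : 0 < e by [].
  rewrite ltr_distl; apply/andP; split; lra.
have := sup_upper_bound (conj (ex_intro _ 0 T0) Tub) Tt.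
by rewrite leNgt tsT.
Qed.
End B.
Section S.
Variables (R : realType) (n : nat) (M : 'M[R]_n).
Local Notation L := (lattice M).
Let mz (k : 'cV[int]_n) : 'cV[R]_n := map_mx (fun z : int => z%:~R) k.
Lemma mzB k1 k2 : mz (k1 - k2) = mz k1 - mz k2.
Proof. by apply/matrixP => i j; rewrite !mxE intrB. Qed.
Lemma mzD k1 k2 : mz (k1 + k2) = mz k1 + mz k2.
Proof. by apply/matrixP => i j; rewrite !mxE intrD. Qed.
Lemma latB x y : L x -> L y -> L (x - y).
Proof.
move=> [k1 _ <-] [k2 _ <-]; exists (k1 - k2) => //.
by rewrite -/(mz _) mzB mulmxBr.
Qed.
Lemma latD x y : L x -> L y -> L (x + y).
Proof.
move=> [k1 _ <-] [k2 _ <-]; exists (k1 + k2) => //.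
by rewrite -/(mz _) mzD mulmxDr.
Qed.
Lemma lat0 : L 0.
Proof. exists 0 => //; apply/matrixP => i j; rewrite !mxE big1 // => k _; by rewrite !mxE mulr0. Qed.
Lemma enorm_ge0 (x : 'cV[R]_n) : 0 <= enorm x.
Proof. exact: sqrtr_ge0. Qed.
Lemma coord_le_enorm (x : 'cV[R]_n) i : `|x i 0| <= enorm x.
Proof.
rewrite -sqrtr_sqr /enorm; apply: ler_wsqrtr.
rewrite (bigD1 i) //= lerDl; apply: sumr_ge0 => j _; exact: sqr_ge0.
Qed.
Lemma sum_sq_le (F : 'I_n -> R) : (forall i, 0 <= F i) ->
  \sum_i F i ^+ 2 <= (\sum_i F i) ^+ 2.
Proof.
move=> F0.
suff : \sum_i F i ^+ 2 <= (\sum_i F i) ^+ 2 /\ 0 <= \sum_i F i by case.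
elim/big_rec2: _ => [|i a b _ [h1 h2]]; first by rewrite expr0n /= lexx.
have := F0 i; split; last by rewrite addr_ge0.
nra.
Qed.
Lemma enorm_le_l1 (x : 'cV[R]_n) : enorm x <= \sum_i `|x i 0|.
Proof.
have s0 : 0 <= \sum_i `|x i 0| by apply: sumr_ge0 => i _.
have -> : \sum_i `|x i 0| = Num.sqrt ((\sum_i `|x i 0|) ^+ 2) by rewrite sqrtr_sqr ger0_norm.
rewrite /enorm; apply: ler_wsqrtr.
have -> : \sum_i x i 0 ^+ 2 = \sum_i `|x i 0| ^+ 2 by apply: eq_bigr => i _; rewrite real_normK ?num_real.
by apply: sum_sq_le.
Qed.
Lemma mulmx_coord_le (v : 'cV[R]_n) (b : R) i :
  (forall j, `|v j 0| <= b) -> `|(M *m v) i 0| <= (\sum_j `|M i j|) * b.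
Proof.
move=> hv; rewrite !mxE mulr_suml.
apply: (le_trans (ler_norm_sum _ _ _)); apply: ler_sum => j _.
by rewrite normrM ler_wpM2l.
Qed.

Lemma fund_bounded : exists B, forall x y, fund_domain M x -> fund_domain M y ->
  enorm (x - y) <= B.
Proof.
exists (\sum_(i < n) (\sum_j `|M i j|)) => x y [t1 h1 <-] [t2 h2 <-].
apply: (le_trans (enorm_le_l1 _)); apply: ler_sum => i _.
rewrite -mulmxBr -[X in _ <= X]mulr1; apply: mulmx_coord_le => j.
rewrite !mxE; have := h1 j; have := h2 j; move=> /andP[a1 a2] /andP[b1 b2].
rewrite ler_norml; apply/andP; split; lra.
Qed.

Lemma lM_ub : has_ubound [set enorm (x - y) | x in fund_domain M & y in fund_domain M].
Proof.
case: fund_bounded => B hB; exists B => _ [x hx [y hy <-]]; exact: hB x y hx hy.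
Qed.

Lemma fund0 : fund_domain M 0.
Proof. by exists 0; [move=> i; rewrite mxE lexx ltr01 | rewrite mulmx0]. Qed.

Lemma le_lM x y : fund_domain M x -> fund_domain M y -> enorm (x - y) <= diam_fund M.
Proof.
move=> hx hy; apply: sup_upper_bound; last by exists x => //; exists y.
split; last exact: lM_ub.
by exists (enorm (x - y)); exists x => //; exists y.
Qed.

Lemma lM_ge0 : 0 <= diam_fund M.
Proof. exact: le_trans (enorm_ge0 _) (le_lM fund0 fund0). Qed.

Lemma near_lat : M \in unitmx -> forall x, exists2 k, L k & enorm (x - k) <= diam_fund M.
Proof.
move=> hM x.
pose t0 := invmx M *m x.
pose k := map_mx (fun r : R => Num.floor r) t0.
exists (M *m mz k); first by exists k.
rewrite -(subr0 (x - _)); apply: le_lM; last exact: fund0.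
exists (t0 - mz k); last by rewrite mulmxBr /t0 mulKVmx.
move=> i; rewrite !mxE; apply/andP; split.
  by rewrite subr_ge0 floor_le.
have := floorD1_gt (t0 i 0); rewrite intrD (_ : (1:int)%:~R = 1 :> R) // /t0 mxE; lra.
Qed.
Lemma mxc_le (A : 'M[R]_n) (v : 'cV[R]_n) (b : R) i :
  (forall j, `|v j 0| <= b) -> `|(A *m v) i 0| <= (\sum_j `|A i j|) * b.
Proof.
move=> hv; rewrite !mxE mulr_suml.
apply: (le_trans (ler_norm_sum _ _ _)); apply: ler_sum => j _.
by rewrite normrM ler_wpM2l.
Qed.

Definition box (c : 'cV[R]_n) (rho : R) := [set x : 'cV[R]_n | forall i, `|x i 0 - c i 0| <= rho].

Lemma box0_finite (rho : R) : M \in unitmx -> 0 <= rho -> finite_set (L `&` box 0 rho).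
Proof.
move=> hM rho0.
pose beta := (\sum_i \sum_j `|invmx M i j|) * rho.
pose Bn := (Num.truncn beta).+1.
have hB : beta < Bn%:R by rewrite /Bn truncnS_gt.
pose g (t : 'cV['I_(Bn + Bn).+1]_n) : 'cV[R]_n :=
  M *m \col_i (((t i 0 : nat)%:R : R) - Bn%:R).
apply: (@sub_finite_set _ _ (g @` setT)); last first.
  by apply: finite_image; exact: finite_finset.
move=> _ [[k _ <-] hx].
have kE : mz k = invmx M *m (M *m mz k) by rewrite mulKmx.
have hk : forall i, `|k i 0| < Bn%:Z.
  move=> i; rewrite -(ltr_int R) intr_norm.
  have := @mxc_le (invmx M) (M *m mz k) rho i.
  rewrite -kE mxE => h.
  apply: (le_lt_trans _ hB); apply: (le_trans (h _)).
    by move=> j; have := hx j; rewrite !mxE subr0.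
  rewrite /beta ler_wpM2r //.
  rewrite [leRHS](bigD1 i) //= lerDl; apply: sumr_ge0 => j _; apply: sumr_ge0 => l _.
  exact: normr_ge0.
exists (\col_i (inord (absz (k i 0 + Bn%:Z)) : 'I_(Bn + Bn).+1)) => //.
rewrite /g; congr (M *m _); apply/matrixP => i j; rewrite !mxE.
have := hk i; rewrite ord1 => hki.
have z0 : 0 <= k i 0 + Bn%:Z.
  by move: hki; rewrite ltr_norml => /andP[h _]; rewrite -lerBlDr sub0r ltW.
rewrite inordK; last first.
  move: hki; rewrite ltr_norml => /andP[h1 h2]; lia.
by rewrite natr_absz ger0_norm // intrD addrK.
Qed.
Lemma count_box (rho : R) : M \in unitmx -> 0 <= rho ->
  exists2 K : R, 0 <= K & forall c, (\esum_(x in L `&` box c rho) (1 : \bar R) <= K%:E)%E.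
Proof.
move=> hM rho0.
pose F := L `&` box 0 (rho + diam_fund M).
have fF : finite_set F by apply: box0_finite => //; rewrite addr_ge0 // lM_ge0.
exists (\sum_(x \in F) (1:R)); first by apply: fsumr_ge0.
move=> c; case: (near_lat hM c) => k0 Lk0 hk0.
rewrite -(esum_image (L `&` box c rho) (fun x => x - k0) (fun=> 1%E)); last first.
  by move=> x y _ _ h; rewrite -(subrK k0 x) h subrK.
have sub : (fun x => x - k0) @` (L `&` box c rho) `<=` F.
  move=> _ [x [Lx bx] <-]; split; first exact: latB.
  move=> i; rewrite !mxE subr0.
  have h1 : `|x i 0 - c i 0| <= rho := bx i.
  have h2 := coord_le_enorm (c - k0) i; rewrite !mxE in h2.
  have h3 : `|c i 0 - k0 i 0| <= diam_fund M := le_trans h2 hk0.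
  have := ler_normD (x i 0 - c i 0) (c i 0 - k0 i 0).
  rewrite addrA subrK => h4; apply: (le_trans h4); exact: lerD.
apply: (le_trans (esum_sub sub _)) => //.
rewrite esum_fset // fsumEFin //.
Qed.
Lemma enormB (x y : 'cV[R]_n) : enorm (x - y) = enorm (y - x).
Proof. by rewrite /enorm; congr Num.sqrt; apply: eq_bigr => i _; rewrite !mxE -sqrrN opprB. Qed.

Lemma cross_point (O : set 'cV[R]_n) (l mu : 'cV[R]_n) : closed O ->
  (l \in O) != (l - mu \in O) -> exists2 s : R, 0 <= s <= 1 & bdry O (l - s *: mu).
Proof.
move=> clO; case: (boolP (l \in O)) => lO /=; rewrite ?inE in lO.
  move=> nO; have {}nO : ~ O (l - mu) by move=> h; move: nO; rewrite mem_set.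
  have [s hs hb] := seg_bdry clO lO nO; exists s => //.
  by move: hb; rewrite addrAC subrr add0r scalerN.
move=> hO; have {}hO : O (l - mu) by move: hO; rewrite eq_sym eqbF_neg negbK inE.
rewrite ?notin_setE in lO.
have [s hs hb] := seg_bdry clO hO lO; exists (1 - s).
  by move: hs => /andP[h1 h2]; apply/andP; split; lra.
suff -> : l - (1 - s) *: mu = l - mu + s *: (l - (l - mu)) by [].
by apply/matrixP => i j; rewrite !mxE; ring.
Qed.

Lemma cover_point (O : set 'cV[R]_n) (r : R) (l mu y : 'cV[R]_n) (s : R) (Np : nat) :
  M \in unitmx -> 0 < r -> enorm mu < Np%:R -> 0 <= s <= 1 -> bdry O y -> y = l - s *: mu ->
  exists2 j : 'I_Np.+1, True & exists2 k, lat_bdry M O (r + diam_fund M) k &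
    box (k + ((j : nat)%:R / Np%:R) *: mu) (1 + diam_fund M) l.
Proof.
move=> hM r0 hN /andP[s0 s1] hy ye.
have Np0 : 0 < (Np%:R : R) by apply: le_lt_trans (enorm_ge0 _) hN.
pose j := Num.truncn (s * Np%:R).
have hj := truncn_itv (mulr_ge0 s0 (ltW Np0)); rewrite -/j in hj.
have jN : (j < Np.+1)%N.
  rewrite ltnS -(ler_nat R); move: hj => /andP[h _]; apply: le_trans h _.
  by rewrite ler_piMl // ltW.
exists (Ordinal jN) => //=.
have [k Lk hk] := near_lat hM y.
exists k.
  split => //; exists y => //; rewrite enormB; apply: le_lt_trans hk _.
  by rewrite ltrDr.
move=> i; rewrite !mxE.
have -> : l i 0 - (k i 0 + j%:R / Np%:R * mu i 0) =
   (y i 0 - k i 0) + (s - j%:R / Np%:R) * mu i 0.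
  by rewrite ye !mxE; ring.
apply: (le_trans (ler_normD _ _)); rewrite [X in _ <= X]addrC; apply: lerD.
  have := coord_le_enorm (y - k) i; rewrite !mxE => h; exact: le_trans h hk.
rewrite normrM.
have h1 : `|s - j%:R / Np%:R| <= 1 / Np%:R.
  rewrite ger0_norm.
    rewrite lerBlDr -mulrDl ler_pdivlMr //; move: hj => /andP[_ h].
    by apply: ltW; rewrite -natr1 addrC in h.
  by rewrite subr_ge0 ler_pdivrMr //; move: hj => /andP[h _].
apply: le_trans (ler_wpM2r (normr_ge0 _) h1) _.
rewrite mul1r mulrC ler_pdivrMr // mul1r; apply: ltW; apply: le_lt_trans hN.
have := coord_le_enorm mu i; by [].
Qed.
Lemma cross_count (K : R) (O : set 'cV[R]_n) (r : R) (mu : 'cV[R]_n) :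
  M \in unitmx -> 0 <= K ->
  (forall c, (\esum_(x in L `&` box c (1 + diam_fund M)) (1 : \bar R) <= K%:E)%E) ->
  closed O -> 0 < r ->
  (\esum_(l in L) (`|(\1_O l : R) - \1_O (l - mu)|)%:E <=
     (K * (enorm mu + 2))%:E * card_e (lat_bdry M O (r + diam_fund M)))%E.
Proof.
move=> hM K0 hK clO r0.
set Bd := lat_bdry M O (r + diam_fund M).
set Np := (Num.truncn (enorm mu)).+1.
have hN : enorm mu < Np%:R by rewrite /Np truncnS_gt.
pose ind (j : 'I_Np.+1) k l : \bar R :=
  if l \in box (k + ((j : nat)%:R / Np%:R) *: mu) (1 + diam_fund M) then 1%E else 0%E.
have ind0 j k l : (0 <= ind j k l)%E by rewrite /ind; case: ifP.
have step1 : forall l, L l -> ((`|(\1_O l : R) - \1_O (l - mu)|)%:E <=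
    \sum_(j < Np.+1) \esum_(k in Bd) ind j k l)%E.
  move=> l Ll; case: (boolP ((l \in O) != (l - mu \in O))) => h; last first.
    move: h; rewrite negbK => /eqP h; rewrite !indicE h subrr normr0.
    by apply: sume_ge0 => j _; apply: esum_ge0 => k _.
  have -> : `|(\1_O l : R) - \1_O (l - mu)| = 1.
    by move: h; rewrite !indicE; case: (l \in O); case: (l - mu \in O) => //= _;
      rewrite ?subr0 ?sub0r ?normrN normr1.
  have [s hs hb] := cross_point clO h.
  have [j _ [k hk hbox]] := cover_point hM r0 hN hs hb (erefl _).
  rewrite (bigD1 j) //=.
  apply: lee_paddr; first by apply: sume_ge0 => i _; apply: esum_ge0 => k' _.
  apply: le_trans (esum_sub (A := [set k]) _ _); last by move=> ? _; exact: ind0.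
    by rewrite esum_set1 // /ind ifT // inE.
  by move=> ? ->.
apply: le_trans (le_esum step1) _.
rewrite esum_sum; last by move=> l j _ _; apply: esum_ge0.
have e j : (\esum_(l in L) \esum_(k in Bd) ind j k l = \esum_(k in Bd) \esum_(l in L) ind j k l)%E.
  by apply: esum_swap.
rewrite (eq_bigr _ (fun j _ => e j)).
have e3 : (\esum_(k in Bd) K%:E = K%:E * card_e Bd)%E.
  by rewrite /card_e -esumZ //; apply: eq_esum => k _; rewrite mule1.
apply: (@le_trans _ _ (\sum_(j < Np.+1) (K%:E * card_e Bd))%E).
  apply: lee_sum => j _; rewrite -e3; apply: le_esum => k _.
  rewrite /ind -esum_mkcondr; exact: hK.
rewrite -ge0_sume_distrl //.
rewrite sumEFin sumr_const card_ord; apply: lee_wpmul2r.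
  by apply: esum_ge0.
rewrite lee_fin -(mulr_natr K Np.+1) ler_wpM2l // /Np -addn2 natrD lerD2r.
by rewrite truncn_le enorm_ge0.
Qed.
Lemma conv_eq (O : set 'cV[R]_n) (phi : 'cV[R]_n -> R) l : L l ->
  (forall x, L x -> 0 <= phi x) ->
  lconv M \1_O phi l = fine (\esum_(mu in L) ((\1_O (l - mu) : R) * phi mu)%:E)%E.
Proof.
move=> Ll phi0; rewrite /lconv.
rewrite (esum1 (D := L) (a := fun y => (Num.max (- ((\1_O y : R) * phi (l - y))) 0)%:E)); last first.
  move=> y Ly; congr (_%:E); apply/max_idPr.
  by rewrite oppr_le0 mulr_ge0 ?indicE ?ler0n // phi0 //; apply: latB.
rewrite /= subr0; congr fine.
rewrite (esum_trans (e := fun mu => l - mu)); last first.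
  split.
  - by move=> mu Lmu; apply: latB.
  - by move=> a b _ _ /= /addrI /oppr_inj.
  - by move=> y Ly; exists (l - y); [exact: latB | rewrite /= subKr].
apply: eq_esum => mu Lmu; rewrite subKr; congr (_%:E); apply/max_idPl.
by rewrite mulr_ge0 // ?indicE ?ler0n // phi0.
Qed.
Lemma pointwise (O : set 'cV[R]_n) (phi : 'cV[R]_n -> R) (delta p : R) l : L l ->
  (forall x, L x -> 0 <= phi x) -> (\esum_(x in L) (phi x)%:E)%E = p%:E ->
  1 - delta <= p -> p <= 1 ->
  ((`|(\1_O l : R) - lconv M \1_O phi l|)%:E <= (delta * \1_O l)%:E +
     \esum_(mu in L) (phi mu * `|(\1_O l : R) - \1_O (l - mu)|)%:E)%E.
Proof.
move=> Ll phi0 hP hp1 hp2.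
rewrite conv_eq //.
set A := (\esum_(mu in L) _)%E.
set D := (\esum_(mu in L) ((1 - \1_O (l - mu)) * phi mu)%:E)%E.
have A0 : (0 <= A)%E by apply: esum_ge0 => mu Lmu; rewrite lee_fin mulr_ge0 ?indicE ?ler0n ?phi0.
have D0 : (0 <= D)%E.
  apply: esum_ge0 => mu Lmu; rewrite lee_fin mulr_ge0 ?phi0 // indicE subr_ge0.
have AD : (A + D)%E = p%:E.
  rewrite -hP /A /D -esumD; last 2 first.
  - by move=> mu Lmu; rewrite lee_fin mulr_ge0 ?indicE ?ler0n ?phi0.
  - by move=> mu Lmu; rewrite lee_fin mulr_ge0 ?phi0 // indicE subr_ge0; case: (l - mu \in O).
  by apply: eq_esum => mu _; rewrite -EFinD -mulrDl addrC subrK mul1r.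
have Afin : A \is a fin_num.
  rewrite ge0_fin_numE //; apply: le_lt_trans (_ : A <= p%:E)%E _; last exact: ltry.
  by rewrite -AD leeDl.
have Dfin : D \is a fin_num.
  rewrite ge0_fin_numE //; apply: le_lt_trans (_ : D <= p%:E)%E _; last exact: ltry.
  by rewrite -AD leeDr.
case: (boolP (l \in O)) => lO.
  have -> : (\1_O l : R) = 1 by rewrite indicE lO.
  have -> : (\esum_(mu in L) (phi mu * `|1 - (\1_O (l - mu) : R)|)%:E)%E = D.
    by apply: eq_esum => mu _; rewrite mulrC ger0_norm // indicE subr_ge0; case: (l - mu \in O).
  rewrite -(fineK Dfin) -EFinD lee_fin.
  have : fine A + fine D = p by apply: EFin_inj; rewrite EFinD !fineK.
  have fA0 : 0 <= fine A by apply: fine_ge0.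
  have fD0 : 0 <= fine D by apply: fine_ge0.
  move=> h; rewrite ger0_norm; lra.
have -> : (\1_O l : R) = 0 by rewrite indicE (negbTE lO).
have -> : (\esum_(mu in L) (phi mu * `|0 - (\1_O (l - mu) : R)|)%:E)%E = A.
  by apply: eq_esum => mu _; rewrite sub0r normrN mulrC ger0_norm // indicE; case: (l - mu \in O).
rewrite mulr0 add0e sub0r normrN ger0_norm ?fineK //.
by apply: fine_ge0.
Qed.
Lemma main_n (hM : M \in unitmx) (r : R) (hr : 0 < r) :
  exists C : R,
  forall (phi : 'cV[R]_n -> R) (delta : R),
    (forall x, lattice M x -> 0 <= phi x) ->
    (l1norm M phi < +oo)%E ->
    (\esum_(x in lattice M) (enorm x * `|phi x|)%:E < +oo)%E ->
    0 <= delta <= 1 ->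
    ((1 - delta)%:E <= \esum_(x in lattice M) (phi x)%:E)%E ->
    (\esum_(x in lattice M) (phi x)%:E <= 1%:E)%E ->
    forall O : set 'cV[R]_n, compact O ->
      (l1norm M (fun x => (\1_O x : R) - lconv M \1_O phi x)%R <=
        C%:E * ((\esum_(x in lattice M) (enorm x * `|phi x|)%:E) + 1%:E)
             * card_e (lat_bdry M O (r + diam_fund M))
        + delta%:E * card_e (O `&` lattice M))%E.
Proof.
have lM0 := lM_ge0.
have [K K0 hK] := count_box hM (addr_ge0 ler01 lM0).
exists (2 * K + 1).
move=> phi delta phi0 _ Sfin /andP[d0 d1] Plo Pup O cO.
have clO : closed O by apply: compact_closed cO; exact: norm_hausdorff.
set S := (\esum_(x in L) (enorm x * `|phi x|)%:E)%E.
set P := (\esum_(x in L) (phi x)%:E)%E.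
have P0 : (0 <= P)%E by apply: esum_ge0 => x Lx; rewrite lee_fin phi0.
have Pfin : P \is a fin_num by rewrite ge0_fin_numE // (le_lt_trans Pup) // ltry.
have S0 : (0 <= S)%E by apply: esum_ge0 => x Lx; rewrite lee_fin mulr_ge0 ?enorm_ge0.
have Sfin' : S \is a fin_num by rewrite ge0_fin_numE.
set p := fine P. have hP : P = p%:E by rewrite fineK.
set s := fine S. have hS : S = s%:E by rewrite fineK.
have p1 : p <= 1 by rewrite -lee_fin -hP.
have p0 : 0 <= p by rewrite -lee_fin -hP.
have s0 : 0 <= s by rewrite -lee_fin -hS.
have pd : 1 - delta <= p by rewrite -lee_fin -hP.
set Bd := card_e (lat_bdry M O (r + diam_fund M)).
set cOL := card_e (O `&` L).
have Bd0 : (0 <= Bd)%E by apply: esum_ge0.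
set X := (\esum_(mu in L) ((phi mu)%:E * ((K * (enorm mu + 2))%:E * Bd)))%E.
have step : (l1norm M (fun x => (\1_O x : R) - lconv M \1_O phi x)%R <= delta%:E * cOL + X)%E.
  rewrite /l1norm.
  apply: le_trans (le_esum (fun l Ll => pointwise O Ll phi0 hP pd p1)) _.
  rewrite esumD; last 2 first.
  - by move=> l _; rewrite lee_fin mulr_ge0 // indicE ler0n.
  - by move=> l _; apply: esum_ge0 => mu Lmu; rewrite lee_fin mulr_ge0 ?phi0.
  apply: leeD.
    under eq_esum do rewrite EFinM.
    rewrite esumZ //; try by move=> l _; rewrite lee_fin indicE ler0n.
    rewrite /cOL /card_e esum_mkcondl.
    rewrite (_ : \esum_(i in L) (\1_O i : R)%:E = \esum_(i in L) (if i \in O then 1 else 0))%E //.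
    by apply: eq_esum => l _; rewrite indicE; case: (l \in O).
  rewrite esum_swap; last by move=> l mu _ Lmu; rewrite lee_fin mulr_ge0 ?phi0.
  apply: le_esum => mu Lmu.
  under eq_esum do rewrite EFinM.
  rewrite esumZ ?phi0 //; try by move=> l _; rewrite lee_fin.
  apply: lee_wpmul2l; first by rewrite lee_fin phi0.
  exact: cross_count hM K0 hK clO hr.
apply: le_trans step _; rewrite [leRHS]addeC; apply: leeD2l.
have C0 : (0 < (2 * K + 1)%:E * (S + 1%:E))%E.
  by rewrite hS -EFinD -EFinM lte_fin mulr_gt0 //; lra.
case: (boolP (Bd \is a fin_num)) => hB; last first.
  move: hB; rewrite ge0_fin_numE // -leNgt leye_eq => /eqP ->.
  by rewrite gt0_muley // leey.
set b := fine Bd; have hb : Bd = b%:E by rewrite fineK.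
have b0 : 0 <= b by rewrite -lee_fin -hb.
have eX : X = ((K * b)%:E * (\esum_(mu in L) ((enorm mu * `|phi mu|)%:E + (2 * phi mu)%:E)))%E.
  rewrite -esumZ; last 2 first.
  - by rewrite mulr_ge0.
  - by move=> mu Lmu; rewrite -EFinD lee_fin addr_ge0 ?mulr_ge0 ?enorm_ge0 ?phi0.
  apply: eq_esum => mu Lmu; rewrite hb (ger0_norm (phi0 _ Lmu)) -EFinD -!EFinM.
  by congr (_%:E); ring.
rewrite eX esumD; last 2 first.
- by move=> mu Lmu; rewrite lee_fin mulr_ge0 ?enorm_ge0.
- by move=> mu Lmu; rewrite lee_fin mulr_ge0 ?phi0.
rewrite -/S (_ : (\esum_(mu in L) (2 * phi mu)%:E = 2%:E * P)%E); last first.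
  under eq_esum do rewrite EFinM.
  by rewrite esumZ // => mu Lmu; rewrite lee_fin phi0.
rewrite hS hP hb -EFinM -EFinD -!EFinM lee_fin.
have h1 : 0 <= K * b by rewrite mulr_ge0.
have h2 : 0 <= K * b * s by rewrite mulr_ge0.
have h3 : 0 <= b * s by rewrite mulr_ge0.
have h4 : K * b * p <= K * b by rewrite ler_piMr.
have -> : K * b * (s + 2 * p) = K * b * s + 2 * (K * b * p) by ring.
have -> : (2 * K + 1) * (s + 1) * b = 2 * (K * b * s) + 2 * (K * b) + b * s + b by ring.
lra.
Qed.
End S.

Unset Implicit Arguments. Set Strict Implicit. Set Printing Implicit Defensive.

Theorem proposition2p2 (R : realType) (d : nat) (hd : (1 <= d)%N)
  (M : 'M[R]_(2 * d)) (hM : M \in unitmx) (r : R) (hr : 0 < r) :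
  exists C : R,
  forall (phi : 'cV[R]_(2 * d) -> R) (delta : R),
    (forall x, lattice M x -> 0 <= phi x) ->
    (l1norm M phi < +oo)%E ->
    (\esum_(x in lattice M) (enorm x * `|phi x|)%:E < +oo)%E ->
    0 <= delta <= 1 ->
    ((1 - delta)%:E <= \esum_(x in lattice M) (phi x)%:E)%E ->
    (\esum_(x in lattice M) (phi x)%:E <= 1%:E)%E ->
    forall O : set 'cV[R]_(2 * d), compact O ->
      (l1norm M (fun x => (\1_O x : R) - lconv M \1_O phi x)%R <=
        C%:E * ((\esum_(x in lattice M) (enorm x * `|phi x|)%:E) + 1%:E)
             * card_e (lat_bdry M O (r + diam_fund M))
        + delta%:E * card_e (O `&` lattice M))%E.
Proof. exact: (@main_n R (2 * d) M hM r hr). Qed.
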